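(* Let $K\ge 2$ and consider the multivariate multiple linear regression model $\mathbf{Y} = \mathbf{X}\boldsymbol{\beta}' + \boldsymbol{\mathcal{E}}$, where $\mathbf{Y}$ is an $n\times K$ matrix of traits, $\mathbf{X}$ is an $n\times 1$ genotype vector, $\boldsymbol{\beta}'=(\beta_1,\dots,\beta_K)$ is the vector of genetic effects, and $\mathrm{vec}(\boldsymbol{\mathcal{E}})\sim N_{nK}(\mathbf{0},\mathbf{I}_n\otimes\boldsymbol{\Sigma})$ with $\boldsymbol{\Sigma}=\sigma^2\big((1-\rho)\mathbf{I}_K+\rho\mathbf{1}\mathbf{1}'\big)$, $\sigma^2>0$, and $\rho>0$ such that $\boldsymbol{\Sigma}$ is positive definite. Assume the genetic effects of the associated traits are equal in size and positive (i.e. every nonzero $\beta_k$ equals a common value $b>0$). Consider two scenarios: ''partial association'', in which exactly $u<K$ of the $\beta_k$ are nonzero, and ''complete association'', in which all $K$ of the $\beta_k$ are nonzero. For testing $H_0:\boldsymbol{\beta}=\mathbf{0}$ with the MANOVA test, the power under partial association is asymptotically larger than the power under complete association if $$\frac{u}{K} > \frac{1-\rho}{1+(K-u-1)\rho},$$ where the right-hand side equals the ratio of the second-largest to the largest eigenvalue of $\boldsymbol{\Sigma}_{K-u}$, the $(K-u)\times(K-u)$ compound-symmetry covariance matrix $\sigma^2((1-\rho)\mathbf{I}_{K-u}+\rho\mathbf{1}\mathbf{1}')$ of the $K-u$ truly unassociated traits.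
   Context: $\mathbf{Y}$ and $\mathbf{X}$ are centered. The MANOVA test (Wilks' lambda, equivalent to the likelihood ratio test under the model) of $H_0:\boldsymbol{\beta}=\mathbf{0}$ uses the statistic $-n\log\big(|\mathbf{E}|/|\mathbf{H}+\mathbf{E}|\big)$, where $\hat{\boldsymbol{\beta}}=\mathbf{Y}'\mathbf{X}(\mathbf{X}'\mathbf{X})^{-1}$, $\mathbf{H}=\hat{\boldsymbol{\beta}}(\mathbf{X}'\mathbf{X})\hat{\boldsymbol{\beta}}'$ is the hypothesis sum-of-squares-and-cross-products matrix and $\mathbf{E}=\mathbf{Y}'\mathbf{Y}-\hat{\boldsymbol{\beta}}(\mathbf{X}'\mathbf{X})\hat{\boldsymbol{\beta}}'$ the error one; under $H_0$ it is approximately $\chi^2_K$ for large $n$, and the test rejects for large values. ''Asymptotically'' refers to the large-sample ($n\to\infty$) approximation of the power. *)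

(* Defs.v *)
From HB Require Import structures.
From mathcomp Require Import all_boot all_order all_algebra.
From mathcomp Require Import all_classical all_reals all_analysis.
Set Implicit Arguments. Unset Strict Implicit. Unset Printing Implicit Defensive.
Import Order.TTheory GRing.Theory Num.Theory.
Local Open Scope ring_scope.

Definition cs_cov {R : pzRingType} (K : nat) (sigma2 rho : R) : 'M[R]_K :=
  sigma2 *: ((1 - rho)%:M + const_mx rho).

Definition posdef {R : numDomainType} (K : nat) (A : 'M[R]_K) : Prop :=
  A^T = A /\ forall v : 'cV[R]_K, v != 0 -> 0 < (v^T *m A *m v) 0 0.

(* chisq_tail k c a = P( a + Z_1^2 + ... + Z_k^2 > c ), Z_i iid N(0,1),
   written as iterated integrals against the standard normal law. *)
Section chisq.
Context {R : realType}.
Fixpoint chisq_tail (k : nat) (c a : R) : \bar R :=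
  match k with
  | 0 => (if c < a then 1 else 0)%:E
  | k'.+1 => (\int[normal_prob 0 1]_z chisq_tail k' c (a + z ^+ 2))%E
  end.
End chisq.

(* Upper tail P(chi^2_K(lam) > c) of the noncentral chi-square distribution
   with K >= 1 degrees of freedom and noncentrality lam >= 0, i.e. the law of
   ||Z + mu||^2 with Z ~ N_K(0, I) and ||mu||^2 = lam (mu = (sqrt lam,0,..,0)). *)
Definition ncchisq_tail {R : realType} (K : nat) (lam c : R) : \bar R :=
  (\int[normal_prob 0 1]_z chisq_tail K.-1 c ((z + Num.sqrt lam) ^+ 2))%E.

(* Non-centrality of the large-sample (local alternative) distribution of the
   MANOVA / LRT statistic -n log(|E|/|H+E|) in the model Y = X beta' + E,
   vec(E) ~ N(0, I_n (x) Sigma), with s = lim X'X/n > 0 (X centered):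
   lam = s * beta' Sigma^{-1} beta. *)
Definition manova_noncentrality {R : realType} (K : nat) (s : R)
  (Sigma : 'M[R]_K) (beta : 'cV[R]_K) : R :=
  s * (beta^T *m invmx Sigma *m beta) 0 0.

(* Asymptotic power of the MANOVA test rejecting when the statistic exceeds
   the critical value c (the upper-alpha quantile of chi^2_K):
   P(chi^2_K(lam) > c). *)
Definition manova_asym_power {R : realType} (K : nat) (s : R)
  (Sigma : 'M[R]_K) (beta : 'cV[R]_K) (c : R) : \bar R :=
  ncchisq_tail K (manova_noncentrality s Sigma beta) c.

(* Main.v *)
Require Import Defs.
From HB Require Import structures.
From mathcomp Require Import all_boot all_order all_algebra.
From mathcomp Require Import all_classical all_reals all_analysis.
From mathcomp Require Import measurable_realfun.
From mathcomp Require Import ring lra.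

Module SAlg.
Set Implicit Arguments. Unset Strict Implicit. Unset Printing Implicit Defensive.
Import Order.TTheory GRing.Theory Num.Theory.
Local Open Scope ring_scope.

Section Alg.
Variable R : comUnitRingType.
Variable K : nat.

Definition CSM (x y : R) : 'M[R]_K := \matrix_(i, j) (x * (i == j)%:R + y).

Lemma delta_sum (i : 'I_K) (f : 'I_K -> R) : \sum_j (i == j)%:R * f j = f i.
Proof.
rewrite (bigD1 i) //= eqxx mul1r big1 ?addr0 // => j.
by rewrite eq_sym => /negbTE ->; rewrite mul0r.
Qed.

Lemma delta_sum' (i : 'I_K) (f : 'I_K -> R) : \sum_j f j * (j == i)%:R = f i.
Proof.
rewrite (bigD1 i) //= eqxx mulr1 big1 ?addr0 // => j.
by move=> /negbTE ->; rewrite mulr0.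
Qed.

Lemma CSM_mul x1 y1 x2 y2 :
  CSM x1 y1 *m CSM x2 y2 = CSM (x1 * x2) (x1 * y2 + y1 * x2 + K%:R * y1 * y2).
Proof.
apply/matrixP => i k; rewrite !mxE.
under eq_bigr => j _ do rewrite !mxE mulrDl (mulrC x1) -mulrA.
rewrite big_split /= delta_sum.
under eq_bigr => j _ do rewrite mulrDr mulrA.
rewrite big_split /= -mulr_sumr -mulr_sumr.
have -> : \sum_(j < K) (j == k)%:R = 1 :> R.
  by rewrite (eq_bigr (fun j => (fun=> 1) j * (j == k)%:R)) ?delta_sum' // => j _; rewrite mul1r.
rewrite sumr_const card_ord -[y2 *+ K]mulr_natl.
ring.
Qed.

Lemma CSM1 : CSM 1 0 = 1%:M.
Proof. by apply/matrixP => i j; rewrite !mxE mul1r addr0. Qed.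

Lemma invmx_CSM x1 y1 x2 y2 : x1 * x2 = 1 -> x1 * y2 + y1 * x2 + K%:R * y1 * y2 = 0 ->
  invmx (CSM x1 y1) = CSM x2 y2.
Proof.
move=> h1 h2.
have hM : CSM x1 y1 *m CSM x2 y2 = 1%:M by rewrite CSM_mul h1 h2 CSM1.
have [uA _] := mulmx1_unit hM.
by rewrite -[RHS](mulKmx uA) hM mulmx1.
Qed.

Lemma qform_CSM x y (v : 'cV[R]_K) :
  (v^T *m CSM x y *m v) 0 0 = x * \sum_i v i 0 ^+ 2 + y * (\sum_i v i 0) ^+ 2.
Proof.
rewrite !mxE.
under eq_bigr => j _ do rewrite !mxE.
under eq_bigr => j _ do (under eq_bigr => i _ do rewrite !mxE; idtac).
have h j : \sum_i v i 0 * (x * (i == j)%:R + y) = x * v j 0 + y * \sum_i v i 0.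
  under eq_bigr => i _ do rewrite mulrDr mulrCA.
  rewrite big_split /= -mulr_sumr (delta_sum' j (fun i => v i 0)) -mulr_suml.
  by rewrite (mulrC _ y).
under eq_bigr => j _ do rewrite h mulrDl -mulrA -expr2.
by rewrite big_split /= -mulr_sumr -mulr_sumr -mulrA -expr2.
Qed.

End Alg.

Section Alg2.
Variable R : realType.

Lemma cs_covE K (sigma2 rho : R) : cs_cov K sigma2 rho = CSM K (sigma2 * (1 - rho)) (sigma2 * rho).
Proof. apply/matrixP => i j; rewrite !mxE; case: (i == j) => /=; rewrite ?mulr1n ?mulr0n ?mulr1 ?mulr0; lra. Qed.

Lemma sum_delta K (i0 : 'I_K) : \sum_(i < K) (i == i0)%:R = 1 :> R.
Proof.
by rewrite (eq_bigr (fun j => (fun=> 1) j * (j == i0)%:R)) ?delta_sum' // => j _; rewrite mul1r.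
Qed.

Lemma rho_lt1 K (sigma2 rho : R) : (2 <= K)%N -> 0 < sigma2 ->
  posdef (cs_cov K sigma2 rho) -> rho < 1.
Proof.
move=> hK hs [_ hpd].
have h0 : (0 < K)%N by apply: leq_trans hK.
have h1 : (1 < K)%N by [].
pose i0 := Ordinal h0; pose i1 := Ordinal h1.
pose v : 'cV[R]_K := \col_i ((i == i0)%:R - (i == i1)%:R).
have hne : i1 != i0 by [].
have vn0 : v != 0.
  apply/negP => /eqP /matrixP /(_ i0 0); rewrite !mxE eqxx.
  by rewrite (eq_sym i0 i1) (negbTE hne) subr0 => /eqP; rewrite oner_eq0.
have := hpd v vn0; rewrite cs_covE qform_CSM.
have -> : \sum_i v i 0 = 0.
  under eq_bigr do rewrite mxE.
  by rewrite sumrB !sum_delta subrr.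
have -> : \sum_i v i 0 ^+ 2 = 2.
  under eq_bigr => i _ do rewrite mxE.
  have e : forall i : 'I_K, ((i == i0)%:R - (i == i1)%:R) ^+ 2 = (i == i0)%:R + (i == i1)%:R :> R.
    move=> i; case: (eqVneq i i0) => [->|ne0].
      by rewrite (eq_sym i0 i1) (negbTE hne) /= ?mulr1n ?mulr0n; ring.
    by case: (eqVneq i i1) => [_|ne1] /=; rewrite ?mulr1n ?mulr0n; ring.
  under eq_bigr => i _ do rewrite e.
  by rewrite big_split /= !sum_delta.
rewrite expr0n /= mulr0 addr0 => hp.
have : 0 < sigma2 * (1 - rho) by move: hp; rewrite pmulr_lgt0 //.
by rewrite pmulr_rgt0 // subr_gt0.
Qed.

End Alg2.

Section Alg3.
Variable R : realType.

Lemma lam_formula K (sigma2 rho s : R) (v : 'cV[R]_K) :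
  0 < sigma2 -> 0 < rho -> rho < 1 ->
  manova_noncentrality s (cs_cov K sigma2 rho) v =
  s * ((sigma2 * (1 - rho))^-1 * \sum_i v i 0 ^+ 2
       - (sigma2 * (1 - rho))^-1 * rho / (1 - rho + K%:R * rho) * (\sum_i v i 0) ^+ 2).
Proof.
move=> hs hr0 hr1.
have hD : 0 < 1 - rho + K%:R * rho.
  have : 0 <= K%:R * rho :> R by rewrite mulr_ge0 // ltW.
  lra.
have hx : sigma2 * (1 - rho) != 0 by rewrite gt_eqF // mulr_gt0 // subr_gt0.
rewrite /manova_noncentrality cs_covE.
rewrite (@invmx_CSM _ _ _ _ ((sigma2 * (1 - rho))^-1)
   (- ((sigma2 * (1 - rho))^-1 * rho / (1 - rho + K%:R * rho)))).
- by rewrite qform_CSM mulNr.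
- by rewrite mulfV.
- field; rewrite gt_eqF // (gt_eqF hs) andbT; apply/eqP; lra.
Qed.

Lemma sum_partial K (b : R) (v : 'cV[R]_K) (u : nat) :
  (forall k, v k 0 = 0 \/ v k 0 = b) -> 0 < b ->
  #|[set k | v k 0 != 0]| = u ->
  \sum_i v i 0 = u%:R * b /\ \sum_i v i 0 ^+ 2 = u%:R * b ^+ 2.
Proof.
move=> hv hb hc.
have e : forall i, v i 0 = b * (v i 0 != 0)%:R.
  move=> i; case: (hv i) => ->; first by rewrite eqxx mulr0.
  by rewrite gt_eqF //= mulr1.
have hcard : \sum_i ((v i 0 != 0)%:R : R) = u%:R.
  rewrite (eq_bigr (fun i => if v i 0 != 0 then 1 else 0)); last by move=> i _; case: (_ != _).
  by rewrite -big_mkcond /= sumr_const -hc cardsE.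
split.
  by under eq_bigr do rewrite e; rewrite -mulr_sumr hcard mulrC.
under eq_bigr do rewrite e exprMn.
have ee : forall i, ((v i 0 != 0)%:R : R) ^+ 2 = (v i 0 != 0)%:R.
  by move=> i; case: (v i 0 != 0); rewrite /= ?expr1n ?expr0n.
under eq_bigr do rewrite ee.
by rewrite -mulr_sumr hcard mulrC.
Qed.

End Alg3.

End SAlg.
Import SAlg.

Module SMeas.
Set Implicit Arguments. Unset Strict Implicit. Unset Printing Implicit Defensive.
Import Order.TTheory GRing.Theory Num.Theory.
Local Open Scope ring_scope.
Local Open Scope classical_set_scope.

Section Meas.
Context {R : realType}.
Local Notation mu := (@lebesgue_measure R).
Local Open Scope ereal_scope.

Lemma integral_normal01 f U : measurable U -> measurable_fun U (f : _ -> \bar R) ->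
  (\int[normal_prob 0 1]_(x in U) `|f x| < +oo)%E ->
  (\int[normal_prob (0:R) 1]_(x in U) f x =
   \int[mu]_(x in U) (f x * (normal_pdf 0 1 x)%:E))%E.
Proof.
move=> mU mf finf.
rewrite -(Radon_Nikodym_change_of_variables (normal_prob_dominates 0 1))//=; last first.
  by apply/integrableP; split.
apply: ae_eq_integral => //.
- apply: emeasurable_funM => //; apply: (measurable_int mu).
  apply: (integrableS _ _ (@subsetT _ _)) => //=.
  by apply: Radon_Nikodym_integrable; exact: normal_prob_dominates.
- apply: emeasurable_funM => //=; apply/measurableT_comp => //=.
  by apply/measurable_funTS; exact: measurable_normal_pdf.
- apply: ae_eqe_mul2l => /=.
  rewrite Radon_NikodymE//=; first exact: normal_prob_dominates.
  move=> abmu.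
  case: cid => /= h [h1 h2 h3].
  apply: integral_ae_eq => //=.
  + exact: integrableS h2.
  + by apply/measurable_funTS/measurableT_comp =>//; exact: measurable_normal_pdf.
  + by move=> E E01 mE; rewrite -h3.
Qed.

Lemma lebesgue_measure_shift (m : R) (A : set R) : measurable A ->
  pushforward mu ((fun x => (x + m)%R) : _ -> measurableTypeR R) A = mu A.
Proof.
move=> mA; apply/esym/lebesgue_measure_unique => //=.
  by apply: measurable_funD.
move=> _ _ [[a b]] _ <-.
rewrite /pushforward.
have -> : (fun x : R => (x + m)%R) @^-1` `]a, b]%classic = `](a - m)%R, (b - m)%R]%classic.
  apply/seteqP; split => x /=; rewrite !in_itv /= ltrBlDr lerBrDr //.
rewrite !lebesgue_measure_itv /= !lte_fin ltrD2r.
by case: ifP => // _; rewrite -!EFinD; congr (_%:E); ring.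
Qed.

Lemma ge0_integral_shift (f : R -> \bar R) (m : R) :
  measurable_fun setT f -> (forall x, 0 <= f x) ->
  \int[mu]_x f (x + m)%R = \int[mu]_x f x.
Proof.
move=> mf f0.
pose phi : measurableTypeR R -> measurableTypeR R := fun x => (x + m)%R.
have mphi : measurable_fun setT phi by apply: measurable_funD.
have h := @ge0_integral_pushforward _ _ (measurableTypeR R) (measurableTypeR R) R phi mphi mu setT f measurableT mf (fun y _ => f0 y).
rewrite preimage_setT in h.
rewrite -[LHS]/(\int[mu]_x (f \o phi) x) -h.
apply: eq_measure_integral => A mA _ /=.
exact: lebesgue_measure_shift.
Qed.

Lemma ge0_integral_reflect (f : R -> \bar R) :
  measurable_fun setT f -> (forall x, 0 <= f x) ->
  \int[mu]_x f (- x)%R = \int[mu]_x f x.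
Proof.
move=> mf f0.
pose phi : measurableTypeR R -> measurableTypeR R := -%R.
have mphi : measurable_fun setT phi by exact: measurable_funN.
have h := @ge0_integral_pushforward _ _ (measurableTypeR R) (measurableTypeR R) R phi mphi mu setT f measurableT mf (fun y _ => f0 y).
rewrite preimage_setT in h.
rewrite -[LHS]/(\int[mu]_x (f \o phi) x) -h.
apply: eq_measure_integral => A mA _ /=.
exact: lebesgue_measureN.
Qed.

Lemma integral_pos_itv (f : R -> R) (l r : R) :
  measurable_fun setT f -> (forall x, 0 <= f x)%R -> (l < r)%R ->
  (forall x, l < x < r -> 0 < f x)%R -> 0 < \int[mu]_x (f x)%:E.
Proof.
move=> mf f0 lr fpos.
rewrite lt0e integral_ge0 ?andbT; last by move=> x _; rewrite lee_fin.
apply/negP => /eqP h0.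
have : ae_eq mu setT (EFin \o f) (cst 0).
  apply/ae_eq_integral_abs => //; first exact/measurable_EFinP.
  rewrite -[RHS]h0; apply: eq_integral => x _ /=; rewrite ?abse_EFin ?ger0_norm //.
case=> N [mN N0 hN].
have sub : `]l, r[%classic `<=` N.
  move=> x; rewrite /= in_itv /= => hx; apply: hN => /= h.
  by have := h I; move=> /eqP; rewrite eqe gt_eqF // fpos.
have h : mu `]l, r[%classic = 0%R by apply: (subset_measure0 _ mN sub N0).
move: h; rewrite lebesgue_measure_itv /= lte_fin lr -EFinD => /eqP; rewrite eqe => /eqP h.
lra.
Qed.

End Meas.

End SMeas.
Import SMeas.

Module SChi.
Set Implicit Arguments. Unset Strict Implicit. Unset Printing Implicit Defensive.
Import Order.TTheory GRing.Theory Num.Theory.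
Local Open Scope ring_scope.
Local Open Scope classical_set_scope.

Section Chi.
Context {R : realType}.
Local Notation mu := (@lebesgue_measure R).
Local Notation N := (@normal_prob R 0 1).
Local Open Scope ereal_scope.

Lemma phi_gt0 (x : R) : (0 < normal_pdf 0 1 x)%R.
Proof.
rewrite /normal_pdf oner_eq0 /=.
by rewrite mulr_gt0 ?expR_gt0 // normal_peak_gt0 // oner_eq0.
Qed.

Lemma integral_N_bound (f : R -> \bar R) : measurable_fun setT f ->
  (forall x, 0 <= f x <= 1) -> 0 <= \int[N]_x f x <= 1.
Proof.
move=> mf hf; apply/andP; split.
  by apply: integral_ge0 => x _; have /andP[] := hf x.
apply: (@le_trans _ _ (\int[N]_x (cst 1) x)).
  apply: ge0_le_integral => //.
  - by move=> x _; have /andP[] := hf x.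
  - by move=> x _; have /andP[] := hf x.
rewrite integral_cst // mul1e.
by rewrite /= probability_setT.
Qed.

Lemma integral_N_lebesgue (f : R -> R) : measurable_fun setT f ->
  (forall x, 0 <= f x <= 1)%R ->
  \int[N]_x (f x)%:E = \int[mu]_x ((f x * normal_pdf 0 1 x)%R)%:E.
Proof.
move=> mf hf.
have mf' : measurable_fun setT (fun x => (f x)%:E) by exact/measurable_EFinP.
rewrite integral_normal01 //.
apply: (@le_lt_trans _ _ 1); last by rewrite ltry.
have := @integral_N_bound (fun x => `|(f x)%:E|).
move=> /(_ _ _) /andP; case => //.
- exact: measurableT_comp.
- by move=> x; have /andP[h0 h1] := hf x; rewrite abse_EFin ger0_norm // !lee_fin h0 h1.
Qed.

Lemma lt_integral_N (f h : R -> R) (l r : R) :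
  measurable_fun setT f -> measurable_fun setT h ->
  (forall x, 0 <= f x)%R -> (forall x, f x <= h x)%R -> (forall x, h x <= 1)%R ->
  (l < r)%R -> (forall x, l < x < r -> f x < h x)%R ->
  \int[N]_x (f x)%:E < \int[N]_x (h x)%:E.
Proof.
move=> mf mh f0 fh h1 lr hlt.
have mhf : measurable_fun setT (fun x => h x - f x)%R by exact: measurable_funB.
have e : \int[N]_x (h x)%:E = \int[N]_x (f x)%:E + \int[N]_x ((h x - f x)%R)%:E.
  rewrite -ge0_integralD //.
  - by apply: eq_integral => x _; rewrite -EFinD addrC subrK.
  - by move=> x _; rewrite lee_fin.
  - exact/measurable_EFinP.
  - by move=> x _; rewrite lee_fin subr_ge0.
  - exact/measurable_EFinP.
have fin : \int[N]_x (f x)%:E \is a fin_num.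
  have mfe : measurable_fun setT (fun x => (f x)%:E) by exact/measurable_EFinP.
  have /andP[a b] := @integral_N_bound (fun x => (f x)%:E) mfe
    (fun x => ltac:(rewrite !lee_fin f0 /=; exact: (le_trans (fh x) (h1 x)))).
  by rewrite ge0_fin_numE // (le_lt_trans b) // ltry.
rewrite e lteDl // integral_N_lebesgue //; last first.
  by move=> x; rewrite subr_ge0 fh /= (le_trans _ (h1 x)) // lerBlDr lerDl f0.
apply: (integral_pos_itv _ _ lr).
- by apply: measurable_funM => //; exact: measurable_normal_pdf.
- by move=> x; rewrite mulr_ge0 // ?subr_ge0 // normal_pdf_ge0.
- by move=> x hx; rewrite mulr_gt0 ?phi_gt0 // subr_gt0 hlt.
Qed.


Section Props.
Variable c : R.

Lemma chisq_props k : (forall a, 0 <= chisq_tail k c a <= 1) /\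
  (forall a b, (a <= b)%R -> chisq_tail k c a <= chisq_tail k c b).
Proof.
elim: k => [|k [hb hm]].
  split => [a|a b ab] /=.
    by case: ltP => _; rewrite !lee_fin; apply/andP; split; lra.
  by rewrite lee_fin; case: ltP => h1; case: ltP => h2; lra.
pose g := fun a => fine (chisq_tail k c a).
have eg : forall a, chisq_tail k c a = (g a)%:E.
  move=> a; rewrite /g fineK //; have /andP[h0 h1] := hb a.
  by rewrite ge0_fin_numE // (le_lt_trans h1) // ltry.
have gnd : {homo g : a b / (a <= b)%R}.
  by move=> a b ab; rewrite /g -lee_fin -!eg; exact: hm.
have mg : measurable_fun setT g by exact: nondecreasing_measurable.
have mz : forall a : R, measurable_fun setT (fun z : R => chisq_tail k c (a + z ^+ 2)%R).
  move=> a; rewrite (_ : (fun z => _) = EFin \o (g \o (fun z : R => a + z ^+ 2)%R)); last first.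
    by apply/funext => z /=; rewrite eg.
  apply/measurable_EFinP; apply: measurableT_comp => //.
  by apply: measurable_funD => //; apply: measurable_funX.
split => [a|a b ab] /=.
  by apply: integral_N_bound => // z; exact: hb.
apply: ge0_le_integral => //.
- by move=> z _; have /andP[] := hb (a + z ^+ 2)%R.
- exact: mz.
- exact: mz.
- by move=> z _; apply: hm; rewrite lerD2r.
Qed.

Lemma chisq_fin k a : chisq_tail k c a = (fine (chisq_tail k c a))%:E.
Proof.
have [hb _] := chisq_props k; rewrite fineK //; have /andP[h0 h1] := hb a.
by rewrite ge0_fin_numE // (le_lt_trans h1) // ltry.
Qed.

Lemma chisq_fine_bound k a : (0 <= fine (chisq_tail k c a) <= 1)%R.
Proof.
have [hb _] := chisq_props k; have := hb a.
by rewrite (chisq_fin k a) !lee_fin.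
Qed.

Lemma chisq_fine_nd k : {homo (fun a => fine (chisq_tail k c a)) : a b / (a <= b)%R}.
Proof.
move=> a b ab; have [_ hm] := chisq_props k; have := hm a b ab.
by rewrite (chisq_fin k a) (chisq_fin k b) lee_fin.
Qed.

Lemma chisq_fine_measurable k : measurable_fun setT (fun a => fine (chisq_tail k c a)).
Proof. exact: nondecreasing_measurable (chisq_fine_nd k). Qed.


Lemma sqrt_lt_sq (m z : R) : (0 <= z)%R -> (Num.sqrt m < z)%R -> (m < z ^+ 2)%R.
Proof.
move=> z0 h.
have [m0|m0] := ltP m 0%R; first by apply: (lt_le_trans m0); exact: sqr_ge0.
have zp : (0 < z)%R := le_lt_trans (sqrtr_ge0 m) h.
have hz2 : (0 < z ^+ 2)%R by rewrite exprn_gt0.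
by rewrite -ltr_sqrt // sqrtr_sqr ger0_norm // ltW.
Qed.

Lemma sq_lt_sqrt (m z : R) : (0 <= z)%R -> (z < Num.sqrt m)%R -> (z ^+ 2 < m)%R.
Proof.
move=> z0 h.
have m0 : (0 < m)%R by rewrite -sqrtr_gt0 (le_lt_trans z0 h).
by rewrite -ltr_sqrt // sqrtr_sqr ger0_norm.
Qed.

Lemma chisq_strict k : (0 < k)%N -> forall a b : R, (a < c)%R -> (a < b)%R ->
  chisq_tail k c a < chisq_tail k c b.
Proof.
case: k => // k _; elim: k => [|k IH] a b hac hab.
  rewrite /=.
  pose st := fun t : R => (if (c < t)%R then 1 else 0 : R)%R.
  have mst : measurable_fun setT st.
    apply: nondecreasing_measurable => // x y xy; rewrite /st.
    by case: ltP => h1; case: ltP => h2; lra.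
  have mz : forall a : R, measurable_fun setT (fun z : R => st (a + z ^+ 2)%R).
    move=> a'; apply: (measurableT_comp mst).
    by apply: measurable_funD => //; apply: measurable_funX.
  suff key : \int[N]_z (st (a + z ^+ 2)%R)%:E < \int[N]_z (st (b + z ^+ 2)%R)%:E by exact: key.
  apply: (@lt_integral_N (fun z => st (a + z ^+ 2)%R) (fun z => st (b + z ^+ 2)%R)
            (Num.sqrt (Num.max (c - b) 0)%R) (Num.sqrt (c - a)%R)).
  - exact: mz.
  - exact: mz.
  - by move=> x; rewrite /st; case: ltP => _; lra.
  - by move=> x; rewrite /st; case: ltP => h1; case: ltP => h2; lra.
  - by move=> x; rewrite /st; case: ltP => _; lra.
  - rewrite ltr_sqrt ?subr_gt0 //.
    by rewrite gt_max; apply/andP; split; lra.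
  - move=> x /andP[h1 h2].
    have x0 : (0 <= x)%R by apply: le_trans (ltW h1); exact: sqrtr_ge0.
    have e1 := sqrt_lt_sq x0 h1; have e2 := sq_lt_sqrt x0 h2.
    have e3 : (c - b <= Num.max (c - b) 0)%R by rewrite le_max lexx.
    rewrite /= /st; case: (ltP c (a + x ^+ 2)%R) => h3; case: (ltP c (b + x ^+ 2)%R) => h4; lra.
have -> : chisq_tail k.+2 c a = \int[N]_z chisq_tail k.+1 c (a + z ^+ 2)%R by [].
have -> : chisq_tail k.+2 c b = \int[N]_z chisq_tail k.+1 c (b + z ^+ 2)%R by [].
under eq_integral => z _ do rewrite (chisq_fin k.+1).
under [X in _ < X]eq_integral => z _ do rewrite (chisq_fin k.+1).
have mz : forall a : R, measurable_fun setT (fun z : R => fine (chisq_tail k.+1 c (a + z ^+ 2)%R)).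
  move=> a'; apply: (measurableT_comp (chisq_fine_measurable k.+1)).
  by apply: measurable_funD => //; apply: measurable_funX.
apply: (@lt_integral_N (fun z => fine (chisq_tail k.+1 c (a + z ^+ 2)%R))
          (fun z => fine (chisq_tail k.+1 c (b + z ^+ 2)%R)) 0 (Num.sqrt (c - a)%R)).
- exact: mz.
- exact: mz.
- by move=> x; have /andP[] := chisq_fine_bound k.+1 (a + x ^+ 2)%R.
- by move=> x; apply: chisq_fine_nd; rewrite lerD2r ltW.
- by move=> x; have /andP[] := chisq_fine_bound k.+1 (b + x ^+ 2)%R.
- by rewrite sqrtr_gt0 subr_gt0.
- move=> x /andP[h1 h2].
  have e2 := sq_lt_sqrt (ltW h1) h2.
  have := IH (a + x ^+ 2)%R (b + x ^+ 2)%R ltac:(lra) ltac:(lra).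
  by rewrite (chisq_fin k.+1 (a + _)) (chisq_fin k.+1 (b + _)) lte_fin.
Qed.

End Props.
End Chi.

End SChi.
Import SChi.

Module SMlr.
Set Implicit Arguments. Unset Strict Implicit. Unset Printing Implicit Defensive.
Import Order.TTheory GRing.Theory Num.Theory.
Local Open Scope ring_scope.
Local Open Scope classical_set_scope.

Section Mlr.
Context {R : realType}.

Definition Ef (x : R) := expR x + expR (- x).

Lemma Ef_even x : Ef (- x) = Ef x.
Proof. by rewrite /Ef opprK addrC. Qed.

Lemma Ef_gt0 x : 0 < Ef x.
Proof. by rewrite /Ef addr_gt0 ?expR_gt0. Qed.

Lemma Ef_diff a b : Ef b - Ef a =
  (expR b - expR a) * (expR a * expR b - 1) / (expR a * expR b).
Proof.
rewrite /Ef !expRN.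
have ha := expR_gt0 a; have hb := expR_gt0 b.
field; apply/andP; split; rewrite gt_eqF //.
Qed.

Lemma Ef_le a b : 0 <= a -> a <= b -> Ef a <= Ef b.
Proof.
move=> a0 ab; rewrite -subr_ge0 Ef_diff.
have ha := expR_gt0 a; have hb := expR_gt0 b.
have ea : 1 <= expR a by rewrite -expR0 ler_expR.
have eb : expR a <= expR b by rewrite ler_expR.
apply: divr_ge0; last by rewrite mulr_ge0 // ltW.
by apply: mulr_ge0; rewrite subr_ge0 //; nra.
Qed.

Lemma Ef_lt a b : 0 <= a -> a < b -> Ef a < Ef b.
Proof.
move=> a0 ab; rewrite -subr_gt0 Ef_diff.
have ha := expR_gt0 a; have hb := expR_gt0 b.
have ea : 1 <= expR a by rewrite -expR0 ler_expR.
have eb : expR a < expR b by rewrite ltr_expR.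
apply: divr_gt0; last by rewrite mulr_gt0.
by apply: mulr_gt0; rewrite subr_gt0 //; nra.
Qed.

Lemma Ef_abs x : Ef x = Ef `|x|.
Proof.
by have [x0|x0] := leP 0 x; [rewrite ger0_norm | rewrite ltr0_norm // Ef_even].
Qed.

Lemma Ef_sq_le x y : x ^+ 2 <= y ^+ 2 -> Ef x <= Ef y.
Proof.
move=> h; rewrite (Ef_abs x) (Ef_abs y); apply: Ef_le => //.
by rewrite -ler_sqr ?nnegrE // !real_normK ?num_real.
Qed.

Lemma Ef_mul x y : Ef x * Ef y = Ef (x + y) + Ef (x - y).
Proof.
rewrite /Ef !expRN !expRD !expRN.
have ha := expR_gt0 x; have hb := expR_gt0 y.
field; apply/andP; split; rewrite gt_eqF //.
Qed.

Lemma Ef_Q m1 m2 s t : 0 <= m1 -> m1 < m2 -> 0 <= s -> s < t ->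
  Ef (m2 * s) * Ef (m1 * t) < Ef (m2 * t) * Ef (m1 * s).
Proof.
move=> hm1 hm hs hst.
rewrite !Ef_mul.
apply: ltr_leD.
  apply: Ef_lt; first by rewrite addr_ge0 // mulr_ge0 //; lra.
  have h1 : 0 < (m2 - m1) * (t - s) by rewrite mulr_gt0 // subr_gt0.
  nra.
apply: Ef_sq_le.
have h1 : 0 <= (m2 ^+ 2 - m1 ^+ 2) * (t ^+ 2 - s ^+ 2).
  apply: mulr_ge0; rewrite subr_ge0 ler_sqr ?nnegrE //; lra.
nra.
Qed.

Definition Am (m t : R) := expR (- (m ^+ 2) / 2) * Ef (m * t).

Lemma Am_init m1 m2 s t : 0 <= m1 -> m1 < m2 -> 0 <= s -> s < t ->
  Am m2 t < Am m1 t -> Am m2 s < Am m1 s.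
Proof.
rewrite /Am => hm1 hm hs hst h.
have q := Ef_Q hm1 hm hs hst.
have e1 := expR_gt0 (- (m1 ^+ 2) / 2); have e2 := expR_gt0 (- (m2 ^+ 2) / 2).
have f1 := Ef_gt0 (m1 * t); have f2 := Ef_gt0 (m1 * s).
have f3 := Ef_gt0 (m2 * s); have f4 := Ef_gt0 (m2 * t).
nra.
Qed.

Lemma Am_after m1 m2 s t : 0 <= m1 -> m1 < m2 -> 0 <= s -> s < t ->
  Am m1 s <= Am m2 s -> Am m1 t < Am m2 t.
Proof.
rewrite /Am => hm1 hm hs hst h.
have q := Ef_Q hm1 hm hs hst.
have e1 := expR_gt0 (- (m1 ^+ 2) / 2); have e2 := expR_gt0 (- (m2 ^+ 2) / 2).
have f1 := Ef_gt0 (m1 * t); have f2 := Ef_gt0 (m1 * s).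
have f3 := Ef_gt0 (m2 * s); have f4 := Ef_gt0 (m2 * t).
nra.
Qed.


Lemma Am_zero m1 m2 : 0 <= m1 -> m1 < m2 -> Am m2 0 < Am m1 0.
Proof.
move=> hm1 hm; rewrite /Am !mulr0 ltr_pM2r ?Ef_gt0 // ltr_expR.
have : m1 ^+ 2 < m2 ^+ 2 by rewrite ltr_pXn2r // ?nnegrE; lra.
lra.
Qed.

Lemma Am_far m1 m2 : 0 <= m1 -> m1 < m2 -> exists T, 0 <= T /\ Am m1 T <= Am m2 T.
Proof.
move=> hm1 hm.
have d0 : 0 < m2 - m1 by rewrite subr_gt0.
have sq : 0 <= m2 ^+ 2 - m1 ^+ 2 by rewrite subr_ge0 ler_pXn2r ?nnegrE //; lra.
pose T := (1 + (m2 ^+ 2 - m1 ^+ 2) / 2) / (m2 - m1).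
have T0 : 0 < T by rewrite /T divr_gt0 //; lra.
exists T; split; first exact: ltW.
have key : - (m2 ^+ 2) / 2 + m2 * T = 1 + (- (m1 ^+ 2) / 2 + m1 * T).
  rewrite /T; field; rewrite gt_eqF //.
have E2 : expR (- (m2 ^+ 2) / 2) * expR (m2 * T) =
          expR 1 * (expR (- (m1 ^+ 2) / 2) * expR (m1 * T)).
  by rewrite -!expRD key.
rewrite /Am /Ef !expRN.
set e1 := expR (- (m1 ^+ 2) / 2) in E2 *.
set e2 := expR (- (m2 ^+ 2) / 2) in E2 *.
set x := expR (m1 * T) in E2 *.
set y := expR (m2 * T) in E2 *.
have he1 : 0 < e1 by exact: expR_gt0.
have he2 : 0 < e2 by exact: expR_gt0.
have hx : 1 <= x by rewrite /x -expR0 ler_expR mulr_ge0 // ltW.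
have hy : 1 <= y by rewrite /y -expR0 ler_expR mulr_ge0 //; lra.
have ee : 2 <= expR 1 :> R by have := expR_ge1Dx (1 : R); lra.
have ix : x^-1 <= x.
  apply: (le_trans _ hx); rewrite invf_le1 //; lra.
have iy : 0 <= y^-1 by rewrite invr_ge0; lra.
have h1 : e1 * (x + x^-1) <= e1 * (2 * x) by rewrite ler_pM2l //; lra.
have h2 : e2 * y <= e2 * (y + y^-1) by rewrite ler_pM2l //; lra.
have h3 : e1 * (2 * x) <= expR 1 * (e1 * x).
  have hex : 0 < e1 * x by rewrite mulr_gt0 //; lra.
  nra.
lra.
Qed.

Lemma crossing m1 m2 : 0 <= m1 -> m1 < m2 -> exists x0, 0 <= x0 /\
  (forall t, 0 <= t -> t < x0 -> Am m2 t < Am m1 t) /\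
  (forall t, x0 < t -> Am m1 t < Am m2 t).
Proof.
move=> hm1 hm.
have [T [T0 hT]] := Am_far hm1 hm.
pose S := [set t | 0 <= t /\ Am m2 t < Am m1 t].
have S0 : S 0 by split => //; exact: Am_zero.
have ubT : ubound S T.
  move=> t [t0 ht]; rewrite leNgt; apply/negP => Tt.
  have := Am_init hm1 hm T0 Tt ht; lra.
have hS : has_sup S by split; [exists 0 | exists T].
have ub := ub_le_sup (ex_intro _ T ubT : has_ubound S).
exists (sup S); split; first exact: ub.
split.
  move=> t t0 tx.
  have [y Sy ty] := sup_gt (ex_intro _ 0 S0) tx.
  by apply: Am_init hm1 hm t0 ty _; case: Sy.
move=> t xt.
pose y := (sup S + t) / 2.
have y0 : 0 <= y by (have := ub 0 S0; rewrite /y; lra).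
have yt : y < t by (rewrite /y; lra).
apply: (Am_after hm1 hm y0 yt).
rewrite leNgt; apply/negP => hy.
have := ub y (conj y0 hy); rewrite /y; lra.
Qed.

Lemma Am_abs m x : 0 <= m -> Am m x = Am m `|x|.
Proof. by move=> m0; rewrite /Am [in LHS]Ef_abs normrM (ger0_norm m0). Qed.

Lemma sqrt_lt_sq' (m z : R) : 0 <= z -> Num.sqrt m < z -> m < z ^+ 2.
Proof.
move=> z0 h.
have [m0|m0] := ltP m 0; first by apply: (lt_le_trans m0); exact: sqr_ge0.
have zp : 0 < z := le_lt_trans (sqrtr_ge0 m) h.
have hz2 : 0 < z ^+ 2 by rewrite exprn_gt0.
by rewrite -ltr_sqrt // sqrtr_sqr ger0_norm // ltW.
Qed.

Lemma sq_lt_sqrt' (m z : R) : 0 <= z -> z < Num.sqrt m -> z ^+ 2 < m.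
Proof.
move=> z0 h.
have m0 : 0 < m by rewrite -sqrtr_gt0 (le_lt_trans z0 h).
by rewrite -ltr_sqrt // sqrtr_sqr ger0_norm.
Qed.

Lemma Pw (g : R -> R) (c m1 m2 : R) : 0 < c -> 0 <= m1 -> m1 < m2 ->
  {homo g : a b / a <= b} -> (forall u v, u < c -> u < v -> g u < g v) ->
  exists y l r, l < r /\
    (forall x, 0 <= (g (x ^+ 2) - g y) * (Am m2 x - Am m1 x)) /\
    (forall x, l < x < r -> 0 < (g (x ^+ 2) - g y) * (Am m2 x - Am m1 x)).
Proof.
move=> c0 hm1 hm gnd gst.
have hm2 : 0 <= m2 by lra.
have [x0 [x00 [hbef haft]]] := crossing hm1 hm.
exists (x0 ^+ 2).
have [hc|hc] := ltP (x0 ^+ 2) c.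
- exists x0, (Num.sqrt c); split.
    by rewrite -(ger0_norm x00) -sqrtr_sqr ltr_sqrt.
  split.
  + move=> x; rewrite (Am_abs x hm1) (Am_abs x hm2).
    have -> : x ^+ 2 = `|x| ^+ 2 by rewrite real_normK ?num_real.
    set y := `|x|; have y0 : 0 <= y by exact: normr_ge0.
    case: (ltgtP y x0) => hy.
    * have a := hbef y y0 hy.
      have b : g (y ^+ 2) <= g (x0 ^+ 2) by apply: gnd; rewrite ler_pXn2r ?nnegrE //; exact: ltW.
      by apply: mulr_le0; lra.
    * have a := haft y hy.
      have b : g (x0 ^+ 2) <= g (y ^+ 2) by apply: gnd; rewrite ler_pXn2r ?nnegrE //; exact: ltW.
      by apply: mulr_ge0; lra.
    * by rewrite hy subrr mul0r.
  + move=> x /andP[h1 h2].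
    have x0' : 0 <= x by lra.
    have a := haft x h1.
    have b : g (x0 ^+ 2) < g (x ^+ 2).
      by apply: gst => //; rewrite ltr_pXn2r ?nnegrE.
    by apply: mulr_gt0; lra.
- exists 0, (Num.sqrt c); split; first by rewrite sqrtr_gt0.
  split.
  + move=> x; rewrite (Am_abs x hm1) (Am_abs x hm2).
    have -> : x ^+ 2 = `|x| ^+ 2 by rewrite real_normK ?num_real.
    set y := `|x|; have y0 : 0 <= y by exact: normr_ge0.
    case: (ltgtP y x0) => hy.
    * have a := hbef y y0 hy.
      have b : g (y ^+ 2) <= g (x0 ^+ 2) by apply: gnd; rewrite ler_pXn2r ?nnegrE //; exact: ltW.
      by apply: mulr_le0; lra.
    * have a := haft y hy.
      have b : g (x0 ^+ 2) <= g (y ^+ 2) by apply: gnd; rewrite ler_pXn2r ?nnegrE //; exact: ltW.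
      by apply: mulr_ge0; lra.
    * by rewrite hy subrr mul0r.
  + move=> x /andP[h1 h2].
    have x0' : 0 <= x by lra.
    have sc : Num.sqrt c <= x0 by rewrite -(ger0_norm x00) -sqrtr_sqr ler_sqrt // sqr_ge0.
    have a := hbef x x0' (lt_le_trans h2 sc).
    have e := sq_lt_sqrt' x0' h2.
    have b : g (x ^+ 2) < g (x0 ^+ 2).
      by apply: gst => //; rewrite ltr_pXn2r ?nnegrE //; lra.
    have a' : Am m2 x - Am m1 x < 0 by lra.
    have b' : g (x ^+ 2) - g (x0 ^+ 2) < 0 by lra.
    by rewrite -mulrNN mulr_gt0 // oppr_gt0.
Qed.

End Mlr.

End SMlr.
Import SMlr.

Module SMain.
Set Implicit Arguments. Unset Strict Implicit. Unset Printing Implicit Defensive.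
Import Order.TTheory GRing.Theory Num.Theory.
Local Open Scope ring_scope.
Local Open Scope classical_set_scope.

Section Main.
Context {R : realType}.
Local Notation mu := (@lebesgue_measure R).
Local Notation N := (@normal_prob R 0 1).
Local Notation phi := (normal_pdf (0:R) 1).

Lemma phiE (y : R) : phi y = normal_peak 1 * expR (- (y ^+ 2) / 2).
Proof.
rewrite /normal_pdf oner_eq0 /= /normal_fun subr0 expr1n.
by [].
Qed.

Lemma phi_even (y : R) : phi (- y) = phi y.
Proof. by rewrite !phiE sqrrN. Qed.

Lemma psiE (m x : R) : phi (x - m) + phi (x + m) =
  (normal_peak 1 * expR (- (x ^+ 2) / 2)) * Am m x.
Proof.
rewrite !phiE /Am /Ef.
have e1 : expR (- ((x - m) ^+ 2) / 2) = expR (- (x ^+ 2) / 2) * (expR (- (m ^+ 2) / 2) * expR (m * x)).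
  by rewrite -!expRD; congr expR; field.
have e2 : expR (- ((x + m) ^+ 2) / 2) = expR (- (x ^+ 2) / 2) * (expR (- (m ^+ 2) / 2) * expR (- (m * x))).
  by rewrite -!expRD; congr expR; field.
rewrite e1 e2; ring.
Qed.

Lemma measurable_phi_shift (m : R) : measurable_fun setT (fun x : R => phi (x + m)).
Proof.
apply: measurableT_comp; first exact: measurable_normal_pdf.
by apply: measurable_funD.
Qed.


Lemma mes_sq (g : R -> R) (mg : measurable_fun setT g) (m : R) :
  measurable_fun setT (fun x : R => g ((x + m) ^+ 2)).
Proof.
apply: (measurableT_comp mg).
by apply: measurable_funX; apply: measurable_funD.
Qed.

Lemma mes_gphi (g : R -> R) (mg : measurable_fun setT g) (m : R) :
  measurable_fun setT (fun x : R => g (x ^+ 2) * phi (x + m)).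
Proof.
apply: measurable_funM; last exact: measurable_phi_shift.
apply: (measurableT_comp mg).
by apply: measurable_funX.
Qed.

Local Open Scope ereal_scope.

Lemma JN (g : R -> R) (m : R) : measurable_fun setT g -> (forall a, 0 <= g a <= 1)%R ->
  \int[N]_z (g ((z + m) ^+ 2)%R)%:E = \int[mu]_x ((g (x ^+ 2) * phi (x - m))%R)%:E.
Proof.
move=> mg gb.
rewrite (@integral_N_lebesgue _ (fun z : R => g ((z + m) ^+ 2)%R)); last 2 first.
- exact: mes_sq.
- by move=> x; exact: gb.
rewrite -(@ge0_integral_shift _ (fun x : R => ((g (x ^+ 2) * phi (x - m))%R)%:E) m); last 2 first.
- by apply/measurable_EFinP; exact: mes_gphi.
- move=> x; rewrite lee_fin mulr_ge0 ?normal_pdf_ge0 //.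
  by have /andP[] := gb (x ^+ 2)%R.
by apply: eq_integral => x _; rewrite /= addrK.
Qed.

Lemma nc_as_J (K : nat) (c l : R) :
  ncchisq_tail K l c = \int[mu]_x ((fine (chisq_tail K.-1 c (x ^+ 2)) * phi (x - Num.sqrt l))%R)%:E.
Proof.
rewrite /ncchisq_tail.
under eq_integral => z _ do rewrite (chisq_fin c K.-1).
apply: (@JN (fun a => fine (chisq_tail K.-1 c a))); first exact: chisq_fine_measurable.
by move=> x; exact: chisq_fine_bound.
Qed.


Lemma int_phi_shift (m : R) : \int[mu]_x (phi (x + m))%:E = 1.
Proof.
rewrite (@ge0_integral_shift _ (fun x => (phi x)%:E)).
- exact: integral_normal_pdf.
- by apply/measurable_EFinP; exact: measurable_normal_pdf.
- by move=> x; rewrite lee_fin normal_pdf_ge0.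
Qed.

Lemma int_psi (m : R) : \int[mu]_x ((phi (x - m) + phi (x + m))%R)%:E = 2%:E.
Proof.
under eq_integral do rewrite EFinD.
rewrite ge0_integralD //.
- by rewrite !int_phi_shift.
- by move=> x _; rewrite lee_fin normal_pdf_ge0.
- by apply/measurable_EFinP; exact: measurable_phi_shift.
- by move=> x _; rewrite lee_fin normal_pdf_ge0.
- by apply/measurable_EFinP; exact: measurable_phi_shift.
Qed.

Lemma J_reflect (g : R -> R) (m : R) : measurable_fun setT g -> (forall a, 0 <= g a)%R ->
  \int[mu]_x ((g (x ^+ 2) * phi (x - m))%R)%:E = \int[mu]_x ((g (x ^+ 2) * phi (x + m))%R)%:E.
Proof.
move=> mg g0.
rewrite -(@ge0_integral_reflect _ (fun x : R => ((g (x ^+ 2) * phi (x - m))%R)%:E)); last 2 first.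
- by apply/measurable_EFinP; exact: mes_gphi.
- by move=> x; rewrite lee_fin mulr_ge0 ?normal_pdf_ge0.
by apply: eq_integral => x _; rewrite /= sqrrN -opprD phi_even.
Qed.

Lemma J_double (g : R -> R) (m : R) : measurable_fun setT g -> (forall a, 0 <= g a)%R ->
  let J := \int[mu]_x ((g (x ^+ 2) * phi (x - m))%R)%:E in
  J + J = \int[mu]_x ((g (x ^+ 2) * (phi (x - m) + phi (x + m)))%R)%:E.
Proof.
move=> mg g0 J.
rewrite {2}/J J_reflect // -ge0_integralD //.
- by apply: eq_integral => x _; rewrite -EFinD mulrDr.
- by move=> x _; rewrite lee_fin mulr_ge0 ?normal_pdf_ge0.
- by apply/measurable_EFinP; exact: mes_gphi.
- by move=> x _; rewrite lee_fin mulr_ge0 ?normal_pdf_ge0.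
- by apply/measurable_EFinP; exact: mes_gphi.
Qed.


Lemma J_lt (g : R -> R) (c m1 m2 : R) : measurable_fun setT g ->
  (forall a, 0 <= g a <= 1)%R -> {homo g : a b / (a <= b)%R} ->
  (forall u v, u < c -> u < v -> g u < g v)%R -> (0 < c)%R -> (0 <= m1)%R -> (m1 < m2)%R ->
  \int[mu]_x ((g (x ^+ 2) * phi (x - m1))%R)%:E < \int[mu]_x ((g (x ^+ 2) * phi (x - m2))%R)%:E.
Proof.
move=> mg gb gnd gst c0 hm1 hm.
have g0 : forall a, (0 <= g a)%R by move=> a; have /andP[] := gb a.
have [y [l [r [lr [hD hDp]]]]] := Pw c0 hm1 hm gnd gst.
set C := g y.
have C0 : (0 <= C)%R by exact: g0.
set J1 := \int[mu]_x _.
set J2 := \int[mu]_x _.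
pose psi := fun m x : R => (phi (x - m) + phi (x + m))%R.
have psi0 : forall m x, (0 <= psi m x)%R by move=> m x; rewrite addr_ge0 ?normal_pdf_ge0.
have mpsi : forall m, measurable_fun setT (psi m).
  by move=> m; apply: measurable_funD; exact: measurable_phi_shift.
have mgsq : measurable_fun setT (fun x : R => g (x ^+ 2)%R).
  by apply: (measurableT_comp mg); apply: measurable_funX.
have mgpsi : forall m : R, measurable_fun setT (fun x : R => g (x ^+ 2) * psi m x)%R.
  by move=> m; apply: measurable_funM.
have mCpsi : forall m : R, measurable_fun setT (fun x : R => C * psi m x)%R.
  by move=> m; apply: measurable_funM.
pose Dx := fun x : R => ((g (x ^+ 2) - C) * (psi m2 x - psi m1 x))%R.
have DxE : forall x : R, Dx x = (normal_peak 1 * expR (- (x ^+ 2) / 2) * ((g (x ^+ 2) - C) * (Am m2 x - Am m1 x)))%R.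
  by move=> x; rewrite /Dx /psi !psiE; ring.
have Pp : forall x : R, (0 < normal_peak 1 * expR (- (x ^+ 2) / 2))%R.
  by move=> x; rewrite mulr_gt0 ?expR_gt0 // normal_peak_gt0 // oner_eq0.
have D0 : forall x : R, (0 <= Dx x)%R by move=> x; rewrite DxE mulr_ge0 // ltW.
have mDx : measurable_fun setT Dx.
  apply: measurable_funM; first by apply: measurable_funB.
  by apply: measurable_funB.
have ident : forall x : R, (g (x ^+ 2) * psi m2 x + C * psi m1 x =
   (g (x ^+ 2) * psi m1 x + C * psi m2 x) + Dx x)%R.
  by move=> x; rewrite /Dx; ring.
have Jfin : forall m, \int[mu]_x ((g (x ^+ 2) * phi (x - m))%R)%:E \is a fin_num.
  move=> m; rewrite -JN //.
  have /andP[a b] := @integral_N_bound _ (fun z : R => (g ((z + m) ^+ 2)%R)%:E)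
     ltac:(by apply/measurable_EFinP; exact: mes_sq)
     (fun z => ltac:(by rewrite !lee_fin; exact: gb)).
  by rewrite ge0_fin_numE // (le_lt_trans b) // ltry.
have IL : \int[mu]_x ((g (x ^+ 2) * psi m2 x + C * psi m1 x)%R)%:E = (J2 + J2) + C%:E * 2%:E.
{
  under eq_integral do rewrite EFinD.
  rewrite ge0_integralD //.
  all: try (by move=> x _; rewrite lee_fin ?addr_ge0 ?mulr_ge0).
  all: try (by move=> x _; rewrite lee_fin; exact: D0).
  all: try (by apply/measurable_EFinP; first [exact: mgpsi | exact: mCpsi | exact: mDx | (apply: measurable_funD; [exact: mgpsi | exact: mCpsi])]).
  rewrite /J2 J_double //; congr (_ + _).
  under eq_integral do rewrite EFinM.
  rewrite ge0_integralZl_EFin //.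
  all: try (by move=> x _; rewrite lee_fin).
  all: try (by apply/measurable_EFinP).
  all: try (by apply/measurable_EFinP; exact: mpsi).
  by rewrite /psi int_psi.
}
have IR : \int[mu]_x ((g (x ^+ 2) * psi m1 x + C * psi m2 x + Dx x)%R)%:E =
    ((J1 + J1) + C%:E * 2%:E) + \int[mu]_x (Dx x)%:E.
{
  under eq_integral do rewrite EFinD.
  rewrite ge0_integralD //.
  all: try (by move=> x _; rewrite lee_fin ?addr_ge0 ?mulr_ge0).
  all: try (by move=> x _; rewrite lee_fin; exact: D0).
  all: try (by apply/measurable_EFinP; first [exact: mgpsi | exact: mCpsi | exact: mDx | (apply: measurable_funD; [exact: mgpsi | exact: mCpsi])]).
  congr (_ + _).
  under eq_integral do rewrite EFinD.
  rewrite ge0_integralD //.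
  all: try (by move=> x _; rewrite lee_fin ?addr_ge0 ?mulr_ge0).
  all: try (by move=> x _; rewrite lee_fin; exact: D0).
  all: try (by apply/measurable_EFinP; first [exact: mgpsi | exact: mCpsi | exact: mDx | (apply: measurable_funD; [exact: mgpsi | exact: mCpsi])]).
  rewrite /J1 J_double //; congr (_ + _).
  under eq_integral do rewrite EFinM.
  rewrite ge0_integralZl_EFin //.
  all: try (by move=> x _; rewrite lee_fin).
  all: try (by apply/measurable_EFinP; exact: mpsi).
  by rewrite /psi int_psi.
}
have Ipos : 0 < \int[mu]_x (Dx x)%:E.
  apply: (integral_pos_itv mDx D0 lr) => x hx.
  by rewrite DxE mulr_gt0 // hDp.
have key : \int[mu]_x ((g (x ^+ 2) * psi m2 x + C * psi m1 x)%R)%:E =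
           \int[mu]_x ((g (x ^+ 2) * psi m1 x + C * psi m2 x + Dx x)%R)%:E.
  by apply: eq_integral => x _; rewrite ident.
rewrite IL IR in key.
have f1 : J1 \is a fin_num by exact: Jfin.
have f2 : J2 \is a fin_num by exact: Jfin.
have fC : C%:E * 2%:E \is a fin_num by [].
have lt1 : (J1 + J1) + C%:E * 2%:E < (J2 + J2) + C%:E * 2%:E.
  by rewrite key lteDl // fin_numD fin_numD f1 fC.
rewrite lteD2rE // in lt1.
rewrite ltNge; apply/negP => h.
by have := leeD h h; rewrite leNgt lt1.
Qed.


Lemma nc_mono (K : nat) (c l1 l2 : R) : (2 <= K)%N -> (0 < c)%R -> (0 <= l1)%R -> (l1 < l2)%R ->
  ncchisq_tail K l1 c < ncchisq_tail K l2 c.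
Proof.
move=> hK c0 hl1 hl.
have k0 : (0 < K.-1)%N by case: K hK => [|[|K]].
rewrite !nc_as_J.
apply: (@J_lt (fun a => fine (chisq_tail K.-1 c a)) c).
- exact: chisq_fine_measurable.
- by move=> a; exact: chisq_fine_bound.
- exact: chisq_fine_nd.
- move=> u v hu huv; have := chisq_strict k0 hu huv.
  by rewrite (chisq_fin c _ u) (chisq_fin c _ v) lte_fin.
- exact: c0.
- exact: sqrtr_ge0.
- by rewrite ltr_sqrt //; apply: le_lt_trans hl.
Qed.

End Main.

End SMain.
Import SMain.
Unset Implicit Arguments.

Import Order.TTheory GRing.Theory Num.Theory.
Local Open Scope ring_scope.

Theorem theorem1 (R : realType) (K u : nat) (sigma2 rho b s c : R)
  (beta_partial : 'cV[R]_K) :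
  (2 <= K)%N ->
  0 < sigma2 -> 0 < rho ->
  posdef (cs_cov K sigma2 rho) ->
  0 < b ->
  0 < s ->
  0 < c ->
  (0 < u)%N -> (u < K)%N ->
  (forall k, beta_partial k 0 = 0 \/ beta_partial k 0 = b) ->
  #|[set k | beta_partial k 0 != 0]| = u ->
  (1 - rho) / (1 + (K - u - 1)%:R * rho) < u%:R / K%:R ->
  (manova_asym_power s (cs_cov K sigma2 rho) (const_mx b) c
     < manova_asym_power s (cs_cov K sigma2 rho) beta_partial c)%E.
Proof.
move=> hK hs hr0 hpd hb hs0 hc hu0 huK hv hcard hineq.
have hr1 : rho < 1 := rho_lt1 hK hs hpd.
have K0 : (0 < K%:R :> R) by rewrite ltr0n; apply: leq_trans hK.
have u0 : (0 < u%:R :> R) by rewrite ltr0n.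
set D := 1 - rho + K%:R * rho.
have hD : 0 < D.
  have h : 0 <= K%:R * rho by rewrite mulr_ge0 // ltW.
  rewrite /D; lra.
have e : ((K - u - 1)%N%:R : R) = K%:R - u%:R - 1.
  rewrite -subnDA natrB; last by rewrite addn1.
  by rewrite natrD opprD addrA.
set E := 1 + (K - u - 1)%N%:R * rho.
have hE : 0 < E.
  have h : 0 <= (K - u - 1)%N%:R * rho by rewrite mulr_ge0 // ltW.
  rewrite /E; lra.
have hin : (1 - rho) * K%:R < u%:R * E.
  by move: hineq; rewrite ltr_pdivrMr // mulrAC ltr_pdivlMr.
set a := (sigma2 * (1 - rho))^-1.
have ha : 0 < a by rewrite invr_gt0 mulr_gt0 // subr_gt0.
have [sp1 sp2] := sum_partial hv hb hcard.
have sc1 : \sum_i (const_mx b : 'cV[R]_K) i 0 = K%:R * b.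
  by under eq_bigr do rewrite mxE; rewrite sumr_const card_ord mulr_natl.
have sc2 : \sum_i (const_mx b : 'cV[R]_K) i 0 ^+ 2 = K%:R * b ^+ 2.
  by under eq_bigr do rewrite mxE; rewrite sumr_const card_ord mulr_natl.
have lf : manova_noncentrality s (cs_cov K sigma2 rho) (const_mx b) =
          (s * a * b ^+ 2 / D) * (K%:R * (1 - rho)).
  rewrite lam_formula // sc1 sc2 -/a -/D.
  by rewrite /D; field; rewrite gt_eqF.
have lp : manova_noncentrality s (cs_cov K sigma2 rho) beta_partial =
          (s * a * b ^+ 2 / D) * (u%:R * E).
  rewrite lam_formula // sp1 sp2 -/a -/D /E e.
  by rewrite /D; field; rewrite gt_eqF.
have cpos : 0 < s * a * b ^+ 2 / D by rewrite divr_gt0 // mulr_gt0 // ?mulr_gt0 // exprn_gt0.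
rewrite /manova_asym_power; apply: nc_mono => //.
- rewrite lf; apply: mulr_ge0; first exact: ltW.
  apply: mulr_ge0; first exact: ler0n.
  by rewrite subr_ge0 ltW.
- by rewrite lf lp ltr_pM2l // mulrC.
Qed.
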